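(* Let $\Omega=(0,L)^2$ with periodic boundary conditions, $M$ a positive integer, $h=L/M$, and let $\mathbb{V}_h\cong\mathbb{R}^{M^2}$ be the space of real grid functions on the periodic grid $\{(ih,jh):1\le i,j\le M\}$. Let $\Lambda_h$ be the standard five-point central-difference matrix of the Laplacian with periodic boundary conditions, and $\varepsilon>0$. Let $\tau_k>0$ ($k\ge1$) be time steps, $t_k=\sum_{j\le k}\tau_j$, $t_0=0$, with step ratios $r_k=\tau_k/\tau_{k-1}$ for $k\ge2$ and $r_1:=0$. Let $u^n\in\mathbb{V}_h$ solve $$D_2u^n=\varepsilon^2\Lambda_hu^n-f(u^n),\qquad n\ge1,$$ where $f(u)=u^{3}-u$ componentwise, $D_2u^1=(u^1-u^0)/\tau_1$ and, for $n\ge2$, $D_2u^n=\frac{1+2r_n}{\tau_n(1+r_n)}(u^n-u^{n-1})-\frac{r_n^2}{\tau_n(1+r_n)}(u^{n-1}-u^{n-2})$. Assume $$0<r_k<\frac{3+\sqrt{17}}{2}\quad\text{for } 2\le k\le N,$$ and $$\tau_k\le\min\Big\{\frac{1+2r_k}{1+r_k},\ \frac{2+4r_k-r_k^2}{1+r_k}-\frac{r_{k+1}}{1+r_{k+1}}\Big\}\quad\text{for } k\ge1.$$ Define, for $k\ge0$, $$E[u^k]=-\frac{\varepsilon^2}{2}(u^k)^T\Lambda_hu^k+\frac14\sum_{i}\big(1-(u_i^k)^2\big)^2,$$ and the modified energy $\widehat E[u^0]=E[u^0]$ and, for $k\ge1$, $$\widehat E[u^k]=E[u^k]+\frac{r_{k+1}\tau_k}{2(1+r_{k+1})}\sum_i\Big(\frac{u_i^k-u_i^{k-1}}{\tau_k}\Big)^2,$$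 where sums run over all components (grid points). Then $\widehat E[u^k]\le\widehat E[u^{k-1}]$ for all $k\ge1$.
   Context: Nonlinear operations on vectors are componentwise. The ratios $r_{k+1}$ appearing in the step condition and modified energy refer to the (positive) ratio of the next step to the current step. *)

(* Defs.v *)
From HB Require Import structures.
From mathcomp Require Import all_boot all_order all_algebra.
Set Implicit Arguments. Unset Strict Implicit. Unset Printing Implicit Defensive.
Import Order.TTheory GRing.Theory Num.Theory.
Local Open Scope ring_scope.

(* Real grid functions on the periodic M x M grid (indices 0..M-1, which by
   periodicity is the same grid as 1..M). *)
Definition gridfun (R : rcfType) (M : nat) := 'I_M -> 'I_M -> R.

Definition lap (R : rcfType) (M : nat) (h : R) (u : gridfun R M) : gridfun R M :=
  fun i j => (u (ordS i) j + u (ord_pred i) j + u i (ordS j) + u i (ord_pred j)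
              - 4 * u i j) / h ^+ 2.

Definition gsum (R : rcfType) (M : nat) (v : gridfun R M) : R :=
  \sum_(i < M) \sum_(j < M) v i j.

Definition fnl (R : rcfType) (x : R) : R := x ^+ 3 - x.

Definition stepr (R : rcfType) (tau : nat -> R) (k : nat) : R :=
  if (2 <= k)%N then tau k / tau k.-1 else 0.

Definition D2 (R : rcfType) (M : nat) (tau : nat -> R) (u : nat -> gridfun R M)
    (n : nat) : gridfun R M :=
  fun i j =>
    if (n <= 1)%N then (u n i j - u n.-1 i j) / tau n
    else (1 + 2 * stepr tau n) / (tau n * (1 + stepr tau n)) * (u n i j - u n.-1 i j)
       - (stepr tau n) ^+ 2 / (tau n * (1 + stepr tau n)) * (u n.-1 i j - u n.-2 i j).

Definition energy (R : rcfType) (M : nat) (h eps : R) (v : gridfun R M) : R :=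
  - (eps ^+ 2 / 2) * gsum (fun i j => v i j * lap h v i j)
  + 1 / 4 * gsum (fun i j => (1 - v i j ^+ 2) ^+ 2).

Definition menergy (R : rcfType) (M : nat) (h eps : R) (tau : nat -> R)
    (u : nat -> gridfun R M) (k : nat) : R :=
  if k == 0%N then energy h eps (u 0%N)
  else energy h eps (u k)
     + stepr tau k.+1 * tau k / (2 * (1 + stepr tau k.+1))
       * gsum (fun i j => ((u k i j - u k.-1 i j) / tau k) ^+ 2).

(* Main.v *)
Require Import Defs.
From HB Require Import structures.
From mathcomp Require Import all_boot all_order all_algebra.
From mathcomp Require Import ring lra.
Import Order.TTheory GRing.Theory Num.Theory.
Local Open Scope ring_scope.

Module Aux.
Set Implicit Arguments. Unset Strict Implicit.

Section G.
Variables (R : rcfType) (M : nat).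
Implicit Types f g : gridfun R M.

Lemma eq_gsum f g : (forall i j, f i j = g i j) -> gsum f = gsum g.
Proof. by move=> H; apply: eq_bigr => i _; apply: eq_bigr => j _; exact: H. Qed.

Lemma ler_gsum f g : (forall i j, f i j <= g i j) -> gsum f <= gsum g.
Proof. by move=> H; apply: ler_sum => i _; apply: ler_sum => j _; exact: H. Qed.

Lemma gsumD f g : gsum (fun i j => f i j + g i j) = gsum f + gsum g.
Proof. rewrite /gsum -big_split; apply: eq_bigr => i _; exact: big_split. Qed.

Lemma gsumZ c f : gsum (fun i j => c * f i j) = c * gsum f.
Proof. rewrite /gsum mulr_sumr; apply: eq_bigr => i _; by rewrite mulr_sumr. Qed.

Lemma gsumN f : gsum (fun i j => - f i j) = - gsum f.
Proof. rewrite -mulN1r -gsumZ; apply: eq_gsum => i j; by rewrite mulN1r. Qed.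

Lemma gsumB f g : gsum (fun i j => f i j - g i j) = gsum f - gsum g.
Proof. by rewrite gsumD gsumN. Qed.

Lemma gsum0 : gsum (fun (_ _ : 'I_M) => 0 : R) = 0.
Proof. by rewrite /gsum big1 // => i _; rewrite big1. Qed.

Lemma gsum_Si (F : gridfun R M) : gsum (fun i j => F (ordS i) j - F i j) = 0.
Proof.
by rewrite gsumB /gsum [X in _ - X](reindex_inj (@ordS_inj M)) subrr.
Qed.

Lemma gsum_Pi (F : gridfun R M) : gsum (fun i j => F (ord_pred i) j - F i j) = 0.
Proof.
by rewrite gsumB /gsum [X in _ - X](reindex_inj (@ord_pred_inj M)) subrr.
Qed.

Lemma gsum_Sj (F : gridfun R M) : gsum (fun i j => F i (ordS j) - F i j) = 0.
Proof.
rewrite gsumB /gsum -sumrB big1 // => i _.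
by rewrite [X in _ - X](reindex_inj (@ordS_inj M)) subrr.
Qed.

Lemma gsum_Pj (F : gridfun R M) : gsum (fun i j => F i (ord_pred j) - F i j) = 0.
Proof.
rewrite gsumB /gsum -sumrB big1 // => i _.
by rewrite [X in _ - X](reindex_inj (@ord_pred_inj M)) subrr.
Qed.

Definition dirf (v w : gridfun R M) i j :=
  (v (ordS i) j - v i j) * (w (ordS i) j - w i j)
  + (v i (ordS j) - v i j) * (w i (ordS j) - w i j).

Lemma lap_sum (h : R) (v w : gridfun R M) :
  gsum (fun i j => w i j * lap h v i j) = - gsum (dirf v w) / h ^+ 2.
Proof.
have -> : gsum (fun i j => w i j * lap h v i j) =
  gsum (fun i j => w i j * (v (ordS i) j + v (ord_pred i) j + v i (ordS j)
     + v i (ord_pred j) - 4 * v i j)) / h ^+ 2.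
  by rewrite mulrC -gsumZ; apply: eq_gsum => i j; rewrite /lap; ring.
congr (_ / _); apply/eqP; rewrite -subr_eq0 opprK -gsumD.
set F1 := fun i j => v i j * w i j.
set G1 := fun i j => v i j * w (ordS i) j.
set G2 := fun i j => v i j * w i (ordS j).
have := gsum_Si F1; have := gsum_Pi G1; have := gsum_Sj F1; have := gsum_Pj G2.
move=> e1 e2 e3 e4.
rewrite -(addr0 0) -{1}(addr0 0) -{1}(addr0 0).
rewrite -{1}e1 -{1}e2 -{1}e3 -e4 -!gsumD; apply/eqP; apply: eq_gsum => i j.
rewrite /F1 /G1 /G2 /dirf !ord_predK; ring.
Qed.

End G.


Lemma energy_gsum (R : rcfType) M (h eps : R) (v : gridfun R M) :
  energy h eps v = gsum (fun i j => eps ^+ 2 / 2 / h ^+ 2 * dirf v v i j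
                                    + 1 / 4 * (1 - v i j ^+ 2) ^+ 2).
Proof.
rewrite /energy lap_sum [RHS]gsumD !gsumZ; ring.
Qed.

Lemma nl_le (R : rcfType) (a b : R) :
  1 / 4 * (1 - a ^+ 2) ^+ 2 - 1 / 4 * (1 - b ^+ 2) ^+ 2 - (a - b) * fnl a
   - (a - b) ^+ 2 / 2 <= 0.
Proof.
have -> : 1 / 4 * (1 - a ^+ 2) ^+ 2 - 1 / 4 * (1 - b ^+ 2) ^+ 2 - (a - b) * fnl a
   - (a - b) ^+ 2 / 2 = - ((a - b) ^+ 2 * ((a + b) ^+ 2 + 2 * a ^+ 2)) / 4.
  by rewrite /fnl; field.
rewrite mulNr oppr_le0 divr_ge0 // mulr_ge0 ?sqr_ge0 // addr_ge0 ?sqr_ge0 //.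
by rewrite mulr_ge0 // sqr_ge0.
Qed.

Lemma d2_key (R : rcfType) (T T' r s c e : R) :
  0 < T -> 0 < T' -> 0 <= s -> 0 < r -> r = T / T' ->
  T <= (2 + 4 * r - r ^+ 2) / (1 + r) - s / (1 + s) ->
  s * T / (2 * (1 + s)) * (e / T) ^+ 2 - r * T' / (2 * (1 + r)) * (c / T') ^+ 2
  - e * ((1 + 2 * r) / (T * (1 + r)) * e - r ^+ 2 / (T * (1 + r)) * c)
  + e ^+ 2 / 2 <= 0.
Proof.
move=> T0 T'0 s0 r0 hr hc.
have hT' : T' = T / r.
  rewrite hr; field; rewrite ?gt_eqF // ?andbT.
have s1 : 1 + s != 0 by rewrite gt_eqF // ltr_wpDr.
have r1 : 1 + r != 0 by rewrite gt_eqF // ltr_wpDr // ltW.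
have -> : s * T / (2 * (1 + s)) * (e / T) ^+ 2 - r * T' / (2 * (1 + r)) * (c / T') ^+ 2
  - e * ((1 + 2 * r) / (T * (1 + r)) * e - r ^+ 2 / (T * (1 + r)) * c)
  + e ^+ 2 / 2 = (1 / (2 * T)) * ((s / (1 + s) + T - (2 + 4 * r - r ^+ 2) / (1 + r)) * e ^+ 2
      - r ^+ 2 / (1 + r) * (c - e) ^+ 2).
  rewrite hT'; field; rewrite s1 r1 ?gt_eqF // ?andbT.
apply: mulr_ge0_le0; first by rewrite divr_ge0 // mulr_ge0 // ltW.
have h1 : (s / (1 + s) + T - (2 + 4 * r - r ^+ 2) / (1 + r)) * e ^+ 2 <= 0.
  by apply: mulr_le0_ge0; [lra | exact: sqr_ge0].
have h2 : 0 <= r ^+ 2 / (1 + r) * (c - e) ^+ 2.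
  by rewrite mulr_ge0 ?sqr_ge0 // divr_ge0 ?sqr_ge0 // addr_ge0 // ltW.
lra.
Qed.

Lemma d1_key (R : rcfType) (T s e : R) :
  0 < T -> 0 <= s -> T <= 2 - s / (1 + s) ->
  s * T / (2 * (1 + s)) * (e / T) ^+ 2 - 0 - e * (e / T) + e ^+ 2 / 2 <= 0.
Proof.
move=> T0 s0 hc.
have s1 : 1 + s != 0 by rewrite gt_eqF // ltr_wpDr.
have -> : s * T / (2 * (1 + s)) * (e / T) ^+ 2 - 0 - e * (e / T) + e ^+ 2 / 2
  = (1 / (2 * T)) * ((s / (1 + s) + T - 2) * e ^+ 2).
  field; rewrite s1 !gt_eqF //.
apply: mulr_ge0_le0; first by rewrite divr_ge0 // mulr_ge0 // ltW.
by apply: mulr_le0_ge0; [lra | exact: sqr_ge0].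
Qed.

End Aux.
Import Aux.

Theorem theorem3p1 (R : rcfType) (L eps : R) (M N : nat)
    (tau : nat -> R) (u : nat -> gridfun R M) :
  0 < L -> (0 < M)%N -> 0 < eps ->
  (forall k, (1 <= k)%N -> 0 < tau k) ->
  (forall n, (1 <= n <= N)%N -> forall i j,
      D2 tau u n i j = eps ^+ 2 * lap (L / M%:R) (u n) i j - fnl (u n i j)) ->
  (forall k, (2 <= k <= N)%N ->
      0 < stepr tau k /\ stepr tau k < (3 + Num.sqrt 17) / 2) ->
  (forall k, (1 <= k)%N ->
      tau k <= Num.min ((1 + 2 * stepr tau k) / (1 + stepr tau k))
                 ((2 + 4 * stepr tau k - stepr tau k ^+ 2) / (1 + stepr tau k)
                  - stepr tau k.+1 / (1 + stepr tau k.+1))) ->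
  forall k, (1 <= k <= N)%N ->
    menergy (L / M%:R) eps tau u k <= menergy (L / M%:R) eps tau u k.-1.
Proof.
move=> L0 M0 e0 tpos heq _ hc k /andP[k1 kN].
set h := L / M%:R.
set c0 := eps ^+ 2 / 2 / h ^+ 2.
pose d := fun i j => u k i j - u k.-1 i j.
have HW : gsum (fun i j => d i j * D2 tau u k i j + 2 * c0 * dirf (u k) d i j
                           + d i j * fnl (u k i j)) = 0.
  have E1 : gsum (fun i j => d i j * D2 tau u k i j) =
     gsum (fun i j => eps ^+ 2 * (d i j * lap h (u k) i j) - d i j * fnl (u k i j)).
    apply: eq_gsum => i j; rewrite heq ?k1 //; ring.
  rewrite [RHS]gsumB gsumZ lap_sum in E1.
  rewrite (gsumD (fun i j => d i j * D2 tau u k i j + 2 * c0 * dirf (u k) d i j)).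
  rewrite (gsumD (fun i j => d i j * D2 tau u k i j)) E1 gsumZ /c0.
  field; rewrite /h ?andbT gt_eqF // divr_gt0 // ltr0n //.
pose mk := stepr tau k.+1 * tau k / (2 * (1 + stepr tau k.+1)).
pose Bm := fun i j => if k.-1 == 0%N then 0 else
   stepr tau k.-1.+1 * tau k.-1 / (2 * (1 + stepr tau k.-1.+1))
   * ((u k.-1 i j - u k.-1.-1 i j) / tau k.-1) ^+ 2.
have EA : menergy h eps tau u k = gsum (fun i j => c0 * dirf (u k) (u k) i j
     + 1 / 4 * (1 - u k i j ^+ 2) ^+ 2 + mk * ((u k i j - u k.-1 i j) / tau k) ^+ 2).
  have kn0 : (k == 0%N) = false by case: (k) k1.
  rewrite /menergy kn0.
  by rewrite energy_gsum -gsumZ -gsumD.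
have EB : menergy h eps tau u k.-1 = gsum (fun i j => c0 * dirf (u k.-1) (u k.-1) i j
     + 1 / 4 * (1 - u k.-1 i j ^+ 2) ^+ 2 + Bm i j).
  rewrite /menergy /Bm; case: eqP => [->|_].
    by rewrite energy_gsum; apply: eq_gsum => i j; rewrite addr0.
  by rewrite energy_gsum -gsumZ -gsumD.
rewrite EA EB -[X in _ <= X]addr0 -HW -gsumD; apply: ler_gsum => i j.
rewrite -subr_le0.
have Dp : mk * ((u k i j - u k.-1 i j) / tau k) ^+ 2 - Bm i j
   - (u k i j - u k.-1 i j) * D2 tau u k i j + (u k i j - u k.-1 i j) ^+ 2 / 2 <= 0.
  rewrite /mk /Bm /D2; case: (k) k1 => [//|[|k']] _ /=.
    have s0 : 0 <= stepr tau 2 by rewrite /stepr /= divr_ge0 // ltW // tpos.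
    have := hc 1%N isT; rewrite le_min => /andP[_].
    have -> : stepr tau 1 = 0 by [].
    rewrite mulr0 addr0 expr0n /= subr0 addr0 divr1 => hc1.
    have key := d1_key (u 1%N i j - u 0%N i j) (tpos 1%N isT) s0 hc1.
    apply: le_trans key; rewrite le_eqVlt; apply/orP; left; apply/eqP; ring.
  have s0 : 0 <= stepr tau k'.+3 by rewrite /stepr /= divr_ge0 // ltW // tpos.
  have r0 : 0 < stepr tau k'.+2 by rewrite /stepr /= divr_gt0 // tpos.
  have := hc k'.+2 isT; rewrite le_min => /andP[_ hc2].
  have key := d2_key (u k'.+1 i j - u k' i j) (u k'.+2 i j - u k'.+1 i j)
     (tpos k'.+2 isT) (tpos k'.+1 isT) s0 r0 erefl hc2.
  apply: le_trans key; rewrite le_eqVlt; apply/orP; left; apply/eqP; ring.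
have NL := nl_le (u k i j) (u k.-1 i j).
set X1 := (u k (ordS i) j - u k i j) - (u k.-1 (ordS i) j - u k.-1 i j).
set X2 := (u k i (ordS j) - u k i j) - (u k.-1 i (ordS j) - u k.-1 i j).
have Lp : - c0 * (X1 ^+ 2 + X2 ^+ 2) <= 0.
  rewrite mulNr oppr_le0 mulr_ge0 ?addr_ge0 ?sqr_ge0 //.
  by rewrite /c0 !divr_ge0 ?sqr_ge0 // ltW.
set D := D2 tau u k i j; set B := Bm i j.
have -> : c0 * dirf (u k) (u k) i j + 1 / 4 * (1 - u k i j ^+ 2) ^+ 2 +
    mk * ((u k i j - u k.-1 i j) / tau k) ^+ 2 -
  (c0 * dirf (u k.-1) (u k.-1) i j + 1 / 4 * (1 - u k.-1 i j ^+ 2) ^+ 2 + B +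
   (d i j * D + 2 * c0 * dirf (u k) d i j + d i j * fnl (u k i j)))
  = - c0 * (X1 ^+ 2 + X2 ^+ 2)
    + (1 / 4 * (1 - u k i j ^+ 2) ^+ 2 - 1 / 4 * (1 - u k.-1 i j ^+ 2) ^+ 2
       - (u k i j - u k.-1 i j) * fnl (u k i j) - (u k i j - u k.-1 i j) ^+ 2 / 2)
    + (mk * ((u k i j - u k.-1 i j) / tau k) ^+ 2 - B
       - (u k i j - u k.-1 i j) * D + (u k i j - u k.-1 i j) ^+ 2 / 2).
  by rewrite /dirf /d /X1 /X2; ring.
by apply: le_trans (lerD (lerD Lp NL) Dp) _; rewrite !addr0.
Qed.
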